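(* Let $r\in\mathbb{N}$ and let $G$ be a countable graph with infinitely many connected components. Then $\mathrm{Rd}_r(G)\ge 1/r$.
   Context: $K_{\mathbb{N}}$ is the complete graph on $\mathbb{N}=\{1,2,\dots\}$; a copy of $G$ is a subgraph of $K_\mathbb{N}$ isomorphic to $G$, monochromatic if all its edges have the same color. $\overline{d}(V)=\limsup_{t\to\infty}|V\cap\{1,\dots,t\}|/t$. For an $r$-coloring $\varphi$ of the edges of $K_\mathbb{N}$, $\mathrm{Rd}_\varphi(G)$ is the supremum of upper densities of monochromatic copies of $G$; $\mathrm{Rd}_r(G)=\inf_\varphi \mathrm{Rd}_\varphi(G)$ over all $r$-colorings. *)

(* Defs.v *)
From mathcomp Require Import all_boot all_order all_algebra.
From mathcomp Require Import all_classical all_reals all_analysis.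
Set Implicit Arguments. Unset Strict Implicit. Unset Printing Implicit Defensive.
Import Order.TTheory GRing.Theory Num.Theory.
Local Open Scope classical_set_scope.
Local Open Scope ring_scope.

Definition simple_graph (V : Type) (e : V -> V -> bool) : Prop :=
  (forall u v, e u v = e v u) /\ (forall v, ~~ e v v).

Inductive gconnected (V : Type) (e : V -> V -> bool) : V -> V -> Prop :=
| gconn_refl v : gconnected e v v
| gconn_step u v w : e u v -> gconnected e v w -> gconnected e u w.

Definition components (V : Type) (e : V -> V -> bool) : set (set V) :=
  [set C | exists v, C = [set w | gconnected e v w]].

(* An r-colouring of the edges of K_N (N = {1,2,...}): a symmetric
   colour function on pairs of distinct positive integers. Values on 0 or
   on the diagonal are irrelevant. *)
Definition edge_colouring (r : nat) (phi : nat -> nat -> 'I_r) : Prop :=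
  forall x y, (0 < x)%N -> (0 < y)%N -> x != y -> phi x y = phi y x.

(* A copy of G = (V, e) in K_N is given by an injective map f : V -> N; the
   copy is the subgraph with vertex set f(V) and edges {f u, f v}, e u v. *)
Definition is_copy (V : Type) (e : V -> V -> bool) (f : V -> nat) : Prop :=
  injective f /\ (forall v, (0 < f v)%N).

Definition monochromatic (V : Type) (e : V -> V -> bool) (r : nat)
  (phi : nat -> nat -> 'I_r) (f : V -> nat) : Prop :=
  exists c : 'I_r, forall u v, e u v -> phi (f u) (f v) = c.

Definition upper_density (R : realType) (W : set nat) : \bar R :=
  limn_esup (fun t : nat =>
    (((\sum_(1 <= i < t.+1) (if `[< W i >] then 1 else 0))%N)%:R
       / t%:R : R)%:E).

Definition Rd_phi (R : realType) (V : Type) (e : V -> V -> bool) (r : nat)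
  (phi : nat -> nat -> 'I_r) : \bar R :=
  ereal_sup [set d | exists f : V -> nat,
     [/\ is_copy e f, monochromatic e phi f & d = upper_density R (range f)]].

Definition Rd (R : realType) (V : Type) (e : V -> V -> bool) (r : nat) : \bar R :=
  ereal_inf [set Rd_phi R e phi | phi in edge_colouring (r := r)].

(* Main.v *)
Require Import Defs.
From mathcomp Require Import all_boot all_order all_algebra.
From mathcomp Require Import all_classical all_reals all_analysis.
From mathcomp Require Import zify ring lra.
Import Order.TTheory GRing.Theory Num.Theory.
Set Implicit Arguments. Unset Strict Implicit. Unset Printing Implicit Defensive.
Local Open Scope classical_set_scope.

Section NatPart.
Local Open Scope nat_scope.

Definition unb (A : set nat) := forall b, exists x, A x /\ b <= x.

Lemma not_unb (A : set nat) : ~ unb A -> exists b, forall x, A x -> x < b.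
Proof.
move=> nA; case: (pselect (exists b, forall x, A x -> x < b)) => // H.
exfalso; apply: nA => b; case: (pselect (exists x, A x /\ b <= x)) => // H2.
exfalso; apply: H; exists b => x Ax; rewrite ltnNge; apply/negP => bx.
by apply: H2; exists x.
Qed.

Lemma least (X : set nat) a : unb X ->
  exists x, [/\ X x, a <= x & forall y, X y -> a <= y -> x <= y].
Proof.
move=> uX; have [y [Xy ay]] := uX a.
have ex : exists n, (fun n => `[< X n /\ a <= n >]) n by exists y; apply/asboolP.
case: (ex_minnP ex) => m /asboolP [Xm am] Hm; exists m; split => // z Xz az.
by apply: Hm; apply/asboolP.
Qed.

Definition nextX (X : set nat) a :=
  xget 0 [set x | [/\ X x, a <= x & forall y, X y -> a <= y -> x <= y]].

Lemma nextXP X a : unb X ->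
  [/\ X (nextX X a), a <= nextX X a &
      forall y, X y -> a <= y -> nextX X a <= y].
Proof.
move=> uX; rewrite /nextX; case: xgetP => // H.
by have [x Hx] := least a uX; case: (H x Hx).
Qed.

Global Opaque nextX.

Fixpoint enumX (X : set nat) n :=
  if n is n'.+1 then nextX X (enumX X n').+1 else nextX X 0.

Lemma enumX0 X : enumX X 0 = nextX X 0. Proof. by []. Qed.
Lemma enumXS X n : enumX X n.+1 = nextX X (enumX X n).+1. Proof. by []. Qed.

Lemma enumX_spec X : unb X ->
  (forall n, X (enumX X n)) /\ (forall n, enumX X n < enumX X n.+1) /\
  (forall x, X x -> exists n, enumX X n = x).
Proof.
move=> uX.
have inX n : X (enumX X n).
  case: n => [|n]; [rewrite enumX0; by case: (nextXP 0 uX) |].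
  by rewrite enumXS; case: (nextXP (enumX X n).+1 uX).
have lt n : enumX X n < enumX X n.+1.
  by rewrite enumXS; case: (nextXP (enumX X n).+1 uX).
have ge n : n <= enumX X n.
  elim: n => [|n IH]; [exact: leq0n | exact: leq_ltn_trans IH (lt n)].
split=> //; split=> // x Xx.
have ex : exists n, (fun n => x < enumX X n) n.
  by exists x.+1; exact: ge x.+1.
case: (ex_minnP ex) => n xn Hn.
case: n xn Hn => [|m] xn Hn.
  case: (nextXP 0 uX) => _ _ /(_ x Xx (leq0n _)) h.
  have h' : enumX X 0 <= x by rewrite enumX0.
  by move: xn; rewrite ltnNge h'.
exists m; apply/eqP; rewrite eqn_leq; apply/andP; split.
  by rewrite leqNgt; apply/negP => /Hn; rewrite ltnn.
rewrite leqNgt; apply/negP => mx.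
case: (nextXP (enumX X m).+1 uX) => _ _ /(_ x Xx mx) h.
have h' : enumX X m.+1 <= x by rewrite enumXS.
by move: xn; rewrite ltnNge h'.
Qed.

Lemma strict_inj (f : nat -> nat) : (forall n, f n < f n.+1) ->
  forall m n, m < n -> f m < f n.
Proof.
move=> H m n; elim: n => [|n IH]; first by rewrite ltn0.
rewrite ltnS leq_eqVlt => /orP[/eqP mn|/IH h].
  by rewrite mn; exact: H.
exact: ltn_trans h (H n).
Qed.

Lemma strict_injective (f : nat -> nat) : (forall n, f n < f n.+1) -> injective f.
Proof.
move=> H m n fmn; case: (ltngtP m n) => // [/(strict_inj H)|/(strict_inj H)];
  by rewrite fmn ltnn.
Qed.

Lemma enumX_bij X : unb X -> exists en : nat -> nat,
  [/\ forall n, X (en n), injective en & forall x, X x -> exists n, en n = x].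
Proof.
move=> uX; have [h1 [h2 h3]] := enumX_spec uX.
by exists (enumX X); split => //; exact: strict_injective.
Qed.

End NatPart.

Section CPart.
Local Open Scope nat_scope.
Lemma php r (Y : set nat) (g : nat -> 'I_r) : unb Y ->
  exists c, unb [set y | Y y /\ g y = c].
Proof.
move=> uY; case: (pselect (exists c, unb [set y | Y y /\ g y = c])) => // H.
exfalso.
have hb : forall c, exists b, forall y, (Y y /\ g y = c) -> y < b.
  by move=> c; apply: not_unb => uc; apply: H; exists c.
have [B HB] := choice hb.
have [y [Yy By]] := uY (\max_(c : 'I_r) B c).
have h1 := HB (g y) y (conj Yy erefl).
have h2 : B (g y) <= \max_(c : 'I_r) B c by exact: leq_bigmax.
have := leq_trans h1 (leq_trans h2 By).
by rewrite ltnn.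
Qed.

Section Ramsey.
Variables (r : nat) (phi : nat -> nat -> 'I_r).
Hypothesis Hsym : edge_colouring phi.

Definition clique c (Q : set nat) :=
  forall x y, Q x -> Q y -> x <> y -> phi x y = c.

Definition pt (Y : set nat) := xget 0 Y.
Definition Yp (Y : set nat) := [set y | Y y /\ pt Y < y].
Definition col (Y : set nat) :=
  xget (phi 0 0) [set c | unb [set y | Yp Y y /\ phi (pt Y) y = c]].
Definition nxt (Y : set nat) := [set y | Yp Y y /\ phi (pt Y) y = col Y].

Lemma pt_in Y : unb Y -> Y (pt Y).
Proof.
move=> uY; rewrite /pt; case: xgetP => // H.
by have [y [Yy _]] := uY 0; case: (H y).
Qed.

Lemma nxt_unb Y : unb Y -> unb (nxt Y).
Proof.
move=> uY.
have uYp : unb (Yp Y).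
  move=> b; have [y [Yy hy]] := uY (maxn b (pt Y).+1).
  exists y; split; first split => //.
    by apply: leq_trans hy; rewrite leq_maxr.
  by apply: leq_trans hy; rewrite leq_maxl.
have [c uc] := php (phi (pt Y)) uYp.
rewrite /nxt /col; case: xgetP => // H.
by case: (H c).
Qed.

Lemma nxt_sub Y : nxt Y `<=` Y.
Proof. by move=> y [[]]. Qed.

Global Opaque pt col.

Lemma ramsey (X : set nat) : unb X -> (forall x, X x -> 0 < x) ->
  exists c Q, [/\ Q `<=` X, unb Q & clique c Q].
Proof.
move=> uX posX.
pose Ys i := iter i nxt X.
have YsS i : Ys i.+1 = nxt (Ys i) by [].
have uYs i : unb (Ys i).
  elim: i => [|i IH]; first exact: uX.
  by rewrite YsS; exact: nxt_unb.
have subY i j : i <= j -> Ys j `<=` Ys i.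
  elim: j => [|j IH]; first by rewrite leqn0 => /eqP ->.
  rewrite leq_eqVlt => /orP[/eqP ->//|]; rewrite ltnS => /IH h.
  by rewrite YsS; apply: subset_trans h; exact: nxt_sub.
pose x i := pt (Ys i).
pose cc i := col (Ys i).
have xin i : Ys i (x i) by exact: pt_in.
have key i j : i < j -> x i < x j /\ phi (x i) (x j) = cc i.
  move=> ij; have := subY _ _ ij (x j) (xin j); rewrite YsS.
  by move=> [[_ h1] h2].
have [c uc] := php cc (fun b => ex_intro _ b (conj I (leqnn b))).
have xge i : i <= x i.
  elim: i => [|i IH]; first exact: leq0n.
  exact: leq_ltn_trans IH (key i i.+1 (ltnSn i)).1.
exists c, [set y | exists i, cc i = c /\ x i = y]; split.
- move=> y [i [_ <-]]; apply: (subY 0 i (leq0n i)); exact: xin.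
- move=> b; have [i [[_ ci] bi]] := uc b.
  exists (x i); split; first by exists i.
  exact: leq_trans bi (xge i).
- move=> y z [i [ci <-]] [j [cj <-]] neq.
  case: (ltngtP i j) => [ij|ji|ij].
  + by rewrite -ci; exact: (key i j ij).2.
  + rewrite Hsym.
    * by rewrite -cj; exact: (key j i ji).2.
    * exact: posX (subY 0 i (leq0n i) _ (xin i)).
    * exact: posX (subY 0 j (leq0n j) _ (xin j)).
    * by apply/eqP.
  + by case: neq; rewrite ij.
Qed.

Definition good c x := exists Q, [/\ Q x, unb Q, (forall y, Q y -> 0 < y) & clique c Q].

Lemma bad_bounded : exists b, forall x, 0 < x -> (forall c, ~ good c x) -> x < b.
Proof.
have : ~ unb [set x | 0 < x /\ forall c, ~ good c x].
  move=> uB; have [c [Q [QB uQ cQ]]] := ramsey uB (fun x h => h.1).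
  have [y [Qy _]] := uQ 0.
  apply: ((QB y Qy).2 c); exists Q; split => //.
  by move=> z /QB [].
move=> /not_unb [b Hb]; exists b => x x0 hx; exact: Hb.
Qed.

End Ramsey.

End CPart.

Section DPart.
Local Open Scope nat_scope.
Definition above (A : set nat) b := xget 0 [set x | A x /\ b <= x].
Lemma aboveP A b : unb A -> A (above A b) /\ b <= above A b.
Proof.
move=> uA; rewrite /above; case: xgetP => // H.
by have [x hx] := uA b; case: (H x).
Qed.
Global Opaque above.

Definition idx m := logn 2 m.+1.

Fixpoint sp (Q : nat -> set nat) m :=
  if m is m'.+1 then above (Q (idx m)) (maxn (sp Q m').+1 (m * m))
  else above (Q (idx 0)) 0.
Lemma sp0 Q : sp Q 0 = above (Q (idx 0)) 0. Proof. by []. Qed.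
Lemma spS Q m : sp Q m.+1 = above (Q (idx m.+1)) (maxn (sp Q m).+1 (m.+1 * m.+1)).
Proof. by []. Qed.

Lemma sparse (Q : nat -> set nat) : (forall n, unb (Q n)) ->
  exists (S : set nat) (T : nat -> set nat),
   [/\ forall n, T n `<=` Q n, forall n, T n `<=` S, forall n, unb (T n),
       forall n n' x, T n x -> T n' x -> n = n' &
       forall M t, 0 < M -> count (fun i => `[< S i >]) (iota 1 t) <= t %/ M + M].
Proof.
move=> uQ.
have spQ m : Q (idx m) (sp Q m).
  case: m => [|m]; first by rewrite sp0; case: (aboveP 0 (uQ (idx 0))).
  by rewrite spS; case: (aboveP (maxn (sp Q m).+1 (m.+1 * m.+1)) (uQ (idx m.+1))).
have spinc m : sp Q m < sp Q m.+1.
  rewrite spS; case: (aboveP (maxn (sp Q m).+1 (m.+1 * m.+1)) (uQ (idx m.+1))) => _.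
  by apply: leq_trans; rewrite leq_maxl.
have spsq m : m * m <= sp Q m.
  case: m => [|m]; first exact: leq0n.
  rewrite spS; case: (aboveP (maxn (sp Q m).+1 (m.+1 * m.+1)) (uQ (idx m.+1))) => _.
  by apply: leq_trans; rewrite leq_maxr.
have spinj := strict_injective spinc.
exists [set x | exists m, sp Q m = x], (fun n => [set x | exists m, idx m = n /\ sp Q m = x]).
split.
- by move=> n x [m [<- <-]].
- by move=> n x [m [_ <-]]; exists m.
- move=> n b.
  have pos : 0 < (b.*2.+1 * 2 ^ n) by rewrite muln_gt0 expn_gt0.
  pose m := (b.*2.+1 * 2 ^ n).-1.
  have mS : m.+1 = b.*2.+1 * 2 ^ n by rewrite /m prednK.
  exists (sp Q m); split.
    exists m; split => //; rewrite /idx mS logn_Gauss; last by rewrite coprime2n /= odd_double.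
    by rewrite pfactorK.
  have h1 : b.*2.+1 <= m.+1 by rewrite mS leq_pmulr // expn_gt0.
  apply: leq_trans (spsq m); move: h1; rewrite ltnS -addnn => h1.
  clear -h1; nia.
- move=> n n' x [m [<- <-]] [m' [<- /spinj ->]] //.
- move=> M t M0; rewrite -size_filter.
  set k := t %/ M + M.
  have tk : t < k * k.
    apply: leq_trans (ltn_ceil t M0) _; apply: leq_mul.
      by rewrite /k -addn1 leq_add2l.
    exact: leq_addl.
  have -> : k = size (map (sp Q) (iota 0 k)) by rewrite size_map size_iota.
  apply: uniq_leq_size; first by apply: filter_uniq; exact: iota_uniq.
  move=> y; rewrite mem_filter mem_iota => /andP[/asboolP [m <-] /andP[_ hy]].
  apply: map_f; rewrite mem_iota leq0n add0n.
  rewrite ltnNge; apply/negP => km.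
  have : k * k <= m * m by exact: leq_mul.
  move: (spsq m) hy tk; rewrite add1n ltnS => a b c d.
  have := leq_trans c (leq_trans d (leq_trans a b)).
  by rewrite ltnn.
Qed.

End DPart.

Section EPart.
Local Open Scope nat_scope.
Section Comp.
Variables (V : countType) (e : V -> V -> bool).
Hypothesis sg : simple_graph e.

Definition comp (v : V) := [set w | gconnected e v w].

Lemma gtrans u v w : gconnected e u v -> gconnected e v w -> gconnected e u w.
Proof.
elim=> [//|a b c eab _ IH] h; exact: (gconn_step eab (IH h)).
Qed.

Lemma gsym u v : gconnected e u v -> gconnected e v u.
Proof.
elim=> [a|a b c eab _ IH]; first exact: gconn_refl.
apply: gtrans IH _; apply: (@gconn_step _ e b a a); last exact: gconn_refl.
by rewrite sg.1.
Qed.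

Lemma comp_edge u v : e u v -> comp u = comp v.
Proof.
move=> euv; apply/seteqP; split => w /= h.
  apply: gtrans h; apply: gsym; exact: (gconn_step euv (gconn_refl e v)).
exact: (gconn_step euv h).
Qed.

Definition isroot (v : V) := forall u, comp u = comp v -> pickle v <= pickle u.

Lemma root_ex v : exists u, comp u = comp v /\ isroot u.
Proof.
have ex : exists p, (fun p => `[< exists u, comp u = comp v /\ pickle u = p >]) p.
  by exists (pickle v); apply/asboolP; exists v.
case: (ex_minnP ex) => m /asboolP [u [cu pu]] Hm.
exists u; split => // u' cu'; rewrite pu; apply: Hm; apply/asboolP.
by exists u'; rewrite cu' cu.
Qed.

Lemma root_uniq u u' : isroot u -> isroot u' -> comp u = comp u' -> u = u'.
Proof.
move=> ru ru' cuu; apply: (pcan_inj (@pickleK V)); apply/eqP; rewrite eqn_leq.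
by rewrite ru' // ru.
Qed.

Definition rt v := xget v [set u | comp u = comp v /\ isroot u].
Lemma rt_spec v : comp (rt v) = comp v /\ isroot (rt v).
Proof.
rewrite /rt; case: xgetP => // H.
by have [u hu] := root_ex v; case: (H u).
Qed.

Lemma rt_root u : isroot u -> rt u = u.
Proof. by move=> ru; have [h1 h2] := rt_spec u; apply: root_uniq. Qed.

Lemma comp_struct : infinite_set (components e) ->
  exists (k : V -> nat) (isr : V -> Prop),
   [/\ forall u v, e u v -> k u = k v,
       forall u v, isr u -> isr v -> k u = k v -> u = v &
       forall n, exists v, isr v /\ k v = n].
Proof.
move=> inf.
pose P := [set p | exists v, isroot v /\ pickle v = p].
have uP : unb P.
  case: (pselect (unb P)) => // nP; exfalso.
  have [b Hb] := not_unb nP.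
  apply: inf.
  apply: (@sub_finite_set _ _ ((fun p => if unpickle p is Some u then comp u else set0) @` `I_b)).
    move=> C [v ->]; have [h1 h2] := rt_spec v.
    exists (pickle (rt v)); first by apply: Hb; exists (rt v).
    by rewrite pickleK h1.
  exact: finite_image (finite_II b).
have [en [enP eninj ensurj]] := enumX_bij uP.
pose rank p := xget 0 [set n | en n = p].
have rankP p : P p -> en (rank p) = p.
  move=> Pp; rewrite /rank; case: xgetP => // H.
  by have [n hn] := ensurj p Pp; case: (H n).
exists (fun v => rank (pickle (rt v))), isroot; split.
- move=> u v euv; have [hu1 hu2] := rt_spec u; have [hv1 hv2] := rt_spec v.
  suff -> : rt u = rt v by [].
  by apply: root_uniq => //; rewrite hu1 hv1; exact: comp_edge.
- move=> u v ru rv; rewrite (rt_root ru) (rt_root rv) => h.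
  apply: (pcan_inj (@pickleK V)).
  by rewrite -(rankP (pickle u)) ?h ?rankP //; [exists v|exists u].
- move=> n; have [v [rv pv]] := enP n.
  exists v; split => //; rewrite (rt_root rv) pv; apply: eninj.
  by rewrite rankP //; exact: enP.
Qed.

End Comp.
End EPart.

Definition cntN (W : set nat) t := count (fun i => `[< W i >]) (iota 1 t).

Lemma cnt_eq (W : set nat) t :
  (\sum_(1 <= i < t.+1) (if `[< W i >] then 1 else 0))%N = cntN W t.
Proof.
by rewrite -big_mkcond sum1_count /cntN /index_iota subSS subn0.
Qed.

Lemma ud_lb (R : realType) (W : set nat) (a : R) :
  (forall eps : R, (0 < eps)%R -> forall N, exists t,
     (N <= t)%N /\ (a - eps <= (cntN W t)%:R / t%:R)%R) ->
  (a%:E <= upper_density R W)%E.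
Proof.
move=> H; rewrite /upper_density /limn_esup /limf_esup.
apply: le_ereal_inf_tmp => _ [V HV <-]; case: HV => N _ HN.
apply/lee_subgt0Pr => eps eps0.
have [t [Nt ht]] := H eps eps0 N.
apply: le_ereal_sup_tmp; eexists; first by exists t; [exact: HN|reflexivity].
by rewrite cnt_eq -EFinD lee_fin.
Qed.

Local Open Scope ring_scope.
Lemma real_step (R : realType) (t b r M w : nat) (eps : R) :
  (0 < r)%N -> (0 < t)%N -> (0 < M)%N -> (0 < eps)%R ->
  (t <= b + r * (t %/ M + M) + r * w)%N ->
  (3 <= eps * M%:R)%R -> (3 * (b%:R + r%:R * M%:R) <= eps * r%:R * t%:R)%R ->
  ((r%:R)^-1 - eps <= w%:R / t%:R :> R)%R.
Proof.
move=> r0 t0 M0 eps0 h hM ht.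
have rR : (0 < r%:R :> R)%R by rewrite ltr0n.
have tR : (0 < t%:R :> R)%R by rewrite ltr0n.
have MR : (0 < M%:R :> R)%R by rewrite ltr0n.
have qM : ((t %/ M)%:R * M%:R <= t%:R :> R)%R by rewrite -natrM ler_nat leq_divM.
have h' : (t%:R <= b%:R + r%:R * ((t %/ M)%:R + M%:R) + r%:R * w%:R :> R)%R.
  by move: h; rewrite -(ler_nat R) !(natrD, natrM).
set q := ((t %/ M)%:R : R) in qM h'.
have q0 : (0 <= q)%R by rewrite /q ler0n.
have h5 : (3 * q <= eps * t%:R)%R.
  apply: le_trans (_ : eps * M%:R * q <= _)%R.
    by rewrite ler_wpM2r.
  by rewrite -mulrA ler_wpM2l ?(ltW eps0) // mulrC.
have h6 : (3 * r%:R * q <= eps * r%:R * t%:R)%R.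
  have := ler_wpM2r (ltW rR) h5.
  by rewrite mulrAC [X in (_ <= X)%R -> _]mulrAC.
have key : (t%:R - eps * r%:R * t%:R <= r%:R * w%:R :> R)%R.
  have : (0 <= eps * r%:R * t%:R :> R)%R.
    by apply: mulr_ge0; [apply: mulr_ge0; apply: ltW|apply: ltW].
  move=> p; lra.
have e1 : ((r%:R)^-1 - eps = (t%:R - eps * r%:R * t%:R) / (r%:R * t%:R) :> R)%R.
  by field; rewrite !pnatr_eq0 -!lt0n t0 r0.
have e2 : (w%:R / t%:R = (r%:R * w%:R) / (r%:R * t%:R) :> R)%R.
  by field; rewrite !pnatr_eq0 -!lt0n t0 r0.
rewrite e1 e2 ler_pM2r //.
by rewrite invr_gt0 mulr_gt0.
Qed.

Lemma count_lt (b t : nat) : (count (fun x => x < b)%N (iota 1 t) <= b)%N.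
Proof.
rewrite -size_filter.
have sub : {subset seq.filter (fun x => x < b)%N (iota 1 t) <= iota 0 b}.
  move=> y; rewrite mem_filter => /andP[yb _]; rewrite mem_iota ?add0n.
  by rewrite leq0n yb.
have := uniq_leq_size (filter_uniq _ (iota_uniq 1 t)) sub.
by rewrite size_iota.
Qed.

Lemma count_cover r (s : seq nat) (P J : pred nat) (F G : 'I_r -> pred nat) :
  (forall x, P x -> J x || [exists c, F c x || G c x]) ->
  (count P s <= count J s + \sum_(c < r) (count (F c) s + count (G c) s))%N.
Proof.
move=> H; elim: s => [|x s IH] /=; first exact: leq0n.
have e : (\sum_(c < r) (count (F c) (x :: s) + count (G c) (x :: s)) =
   \sum_(c < r) (F c x + G c x) + \sum_(c < r) (count (F c) s + count (G c) s))%N.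
  by rewrite -big_split; apply: eq_bigr => c _ /=; lia.
have px : (P x <= J x + \sum_(c < r) (F c x + G c x))%N.
  case Px: (P x) => //; have := H x Px; case: (J x) => //= /existsP [c hc].
  rewrite (bigD1 c) //=; case: (F c x) hc => /=; case: (G c x) => //= _; lia.
rewrite e; lia.
Qed.

Section ColourMain.
Variables (R : realType) (r : nat) (phi : nat -> nat -> 'I_r).
Hypotheses (Hsym : edge_colouring phi) (r0 : (0 < r)%N).

Lemma colour_main : exists c (W : set nat) (T : nat -> set nat),
 [/\ unb W, (forall w, W w -> (0 < w)%N),
     (forall w, W w -> [/\ unb (T w), (forall x, T w x -> (0 < x)%N) &
                          clique phi c ([set w] `|` T w)]),
     (forall w w' x, T w x -> T w' x -> w = w') /\
     (forall w w' x, W w -> T w' x -> x <> w) &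
     (forall eps : R, 0 < eps -> forall N, exists t, (N <= t)%N /\
         (r%:R)^-1 - eps <= (cntN W t)%:R / t%:R)].
Proof.
have hQ : forall c, exists Qf : nat -> set nat, forall w, unb (Qf w) /\
    (good phi c w -> [/\ Qf w w, (forall y, Qf w y -> (0 < y)%N) & clique phi c (Qf w)]).
  move=> c.
  suff h : forall w, exists Q : set nat, unb Q /\
    (good phi c w -> [/\ Q w, (forall y, Q y -> (0 < y)%N) & clique phi c Q]).
    by have [f Hf] := choice h; exists f.
  move=> w; case: (pselect (good phi c w)) => [[Q [Qw uQ pQ cQ]]|ng].
    by exists Q.
  exists [set n | (0 < n)%N]; split; last by move=> /ng.
  move=> b'; exists b'.+1; split; [exact: ltn0Sn | exact: leqnSn].
have [Qf HQf] := choice hQ.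
have hS : forall c, exists p : set nat * (nat -> set nat),
   [/\ forall n, p.2 n `<=` Qf c n, forall n, p.2 n `<=` p.1, forall n, unb (p.2 n),
       forall n n' x, p.2 n x -> p.2 n' x -> n = n' &
       forall M t, (0 < M)%N -> (count (fun i => `[< p.1 i >]) (iota 1 t) <= t %/ M + M)%N].
  by move=> c; have [S [T H]] := sparse (fun n => (HQf c n).1); exists (S, T).
have [ST HST] := choice hS.
have [b Hb] := bad_bounded Hsym.
pose W c := [set x | good phi c x /\ ~ (ST c).1 x].
have cover : forall t M, (0 < M)%N ->
    (t <= b + r * (t %/ M + M) + \sum_(c < r) cntN (W c) t)%N.
  move=> t M M0.
  have e1 : t = count (fun x => 0 < x)%N (iota 1 t).
    rewrite -[LHS](size_iota 1 t) -count_predT; apply: eq_in_count => x.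
    by rewrite mem_iota => /andP[h _].
  have c1 := @count_cover r (iota 1 t) (fun x => 0 < x)%N (fun x => x < b)%N
    (fun c x => `[< (ST c).1 x >]) (fun c x => `[< W c x >]).
  have c2 : (count (fun x => 0 < x)%N (iota 1 t) <=
      count (fun x => x < b)%N (iota 1 t) +
      \sum_(c < r) (count (fun x => `[< (ST c).1 x >]) (iota 1 t) +
                    count (fun x => `[< W c x >]) (iota 1 t)))%N.
    apply: c1 => x x0.
    case: (pselect (forall c, ~ good phi c x)) => [ng|].
      by rewrite (Hb x x0 ng).
    move=> /existsNP [c /contrapT gc]; apply/orP; right; apply/existsP; exists c.
    case: (pselect ((ST c).1 x)) => hs; first by rewrite asboolT.
    by apply/orP; right; apply/asboolP.
  rewrite big_split /= in c2.
  have c3 : (\sum_(c < r) count (fun x => `[< (ST c).1 x >]) (iota 1 t) <=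
       r * (t %/ M + M))%N.
    apply: leq_trans (_ : \sum_(c < r) (t %/ M + M) <= _)%N.
      by apply: leq_sum => c _; case: (HST c) => _ _ _ _ h5; exact: h5.
    by rewrite big_const_ord iter_addn_0 mulnC.
  have c4 := count_lt b t.
  rewrite {1}e1; apply: leq_trans c2 _; rewrite /cntN -addnA.
  apply: leq_add => //; exact: leq_add.
pose c0 := Ordinal r0.
pose ct t := [arg max_(c > c0) cntN (W c) t].
have maxprop t : (\sum_(c < r) cntN (W c) t <= r * cntN (W (ct t)) t)%N.
  rewrite /ct; case: arg_maxnP => //= cm _ Hm.
  apply: leq_trans (_ : \sum_(c < r) cntN (W cm) t <= _)%N.
    by apply: leq_sum => c _; exact: Hm.
  by rewrite big_const_ord iter_addn_0 mulnC.
have [c uc] := php ct (fun b' => ex_intro _ b' (conj I (leqnn b'))).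
have key t M : (0 < M)%N -> ct t = c ->
    (t <= b + r * (t %/ M + M) + r * cntN (W c) t)%N.
  by move=> M0 <-; apply: leq_trans (cover t M M0) _; rewrite leq_add2l.
exists c, (W c), (ST c).2; split.
- case: (pselect (unb (W c))) => // nW; exfalso.
  have [B HB] := not_unb nW.
  have [t [[_ ct_c] tB]] := uc (2 * b + 4 * r * r + 2 * r * B).+1.
  have M0 : (0 < 2 * r)%N by rewrite muln_gt0.
  have h1 := key t (2 * r)%N M0 ct_c.
  have h2 := leq_divM t (2 * r).
  have h3 : (cntN (W c) t <= B)%N.
    apply: leq_trans (count_lt B t); apply: sub_count => x /asboolP /HB.
    by [].
  have h4 : (r * cntN (W c) t <= r * B)%N by rewrite leq_mul2l h3 orbT.
  move: h1 h2 h4 tB; set q := (t %/ (2 * r))%N; set w := cntN (W c) t.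
  move=> h1 h2 h4 tB; clear -h1 h2 h4 tB; nia.
- by move=> w [[Q [Qw _ pQ _]] _]; exact: pQ.
- move=> w [gw nS]; have [Qww pQ cQ] := (HQf c w).2 gw.
  have [s1 s2 s3 s4 s5] := HST c.
  split.
  + exact: s3.
  + by move=> x /s1 /pQ.
  + move=> x y hx hy xy; apply: cQ => //.
      by case: hx => [->|/s1].
    by case: hy => [->|/s1].
- split; first by move=> w w' x; case: (HST c) => _ _ _ s4 _; exact: s4.
  move=> w w' x [_ nS] hx xw; apply: nS; rewrite -xw.
  by case: (HST c) => _ s2 _ _ _; exact: s2 hx.
- move=> eps eps0 N.
  set M := (Num.Def.archi_bound (3 / eps)).+1.
  have hM : 3 <= eps * M%:R.
    have a1 : 3 / eps < M%:R.
      apply: lt_le_trans (archi_boundP _) _.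
        by rewrite divr_ge0 // ltW.
      by rewrite ler_nat.
    by apply: ltW; rewrite mulrC -ltr_pdivrMr.
  set T0 := Num.Def.archi_bound (3 * (b%:R + r%:R * M%:R) / (eps * r%:R) : R).
  have [t [[_ ct_c] tB]] := uc (maxn N (maxn T0 1)).
  exists t; split; first by apply: leq_trans tB; rewrite leq_maxl.
  have tT0 : (T0 <= t)%N.
    by apply: leq_trans tB; apply: leq_trans (leq_maxr _ _); rewrite leq_maxl.
  have t0 : (0 < t)%N.
    by apply: leq_trans tB; apply: leq_trans (leq_maxr _ _); rewrite leq_maxr.
  apply: (real_step r0 t0 _ eps0 (key t M _ ct_c)) => //.
  have er : 0 < eps * r%:R by rewrite mulr_gt0 // ltr0n.
  have a2 : 3 * (b%:R + r%:R * M%:R) / (eps * r%:R) < t%:R.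
    apply: lt_le_trans (archi_boundP _) _.
      by rewrite divr_ge0 // ltW.
    by rewrite ler_nat.
  rewrite ltr_pdivrMr // in a2.
  by apply: ltW; apply: lt_le_trans a2 _; rewrite [X in (X <= _)%R]mulrC.
Qed.

End ColourMain.

Theorem mainTheorem10 (R : realType) (V : countType) (e : V -> V -> bool)
  (r : nat) :
  (0 < r)%N ->
  simple_graph e ->
  infinite_set (components e) ->
  (((r%:R)^-1 : R)%:E <= Rd R e r)%E.
Proof.
move=> r0 sg inf.
have [k [isr [kedge kinj ksurj]]] := comp_struct sg inf.
rewrite /Rd; apply: le_ereal_inf_tmp => _ [phi Hphi <-].
have [c [W [T [uW Wpos WT [Tdisj Troot] dens]]]] := colour_main R Hphi r0.
have [en [enW eninj ensurj]] := enumX_bij uW.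
have hg : forall w, exists g : nat -> nat, W w -> (forall n, T w (g n)) /\ injective g.
  move=> w; case: (pselect (W w)) => Ww; last by exists id.
  have [uT _ _] := WT w Ww; have [g [g1 g2 _]] := enumX_bij uT.
  by exists g.
have [g Hg] := choice hg.
pose f v := if `[< isr v >] then en (k v) else g (en (k v)) (pickle v).
have fT v : ~ isr v -> T (en (k v)) (f v).
  by move=> nv; rewrite /f asboolF //; exact: ((Hg _ (enW _)).1).
have fR v : isr v -> f v = en (k v) by move=> hv; rewrite /f asboolT.
have finj : injective f.
  move=> u v; case: (pselect (isr u)) => hu; case: (pselect (isr v)) => hv.
  - by rewrite !fR // => /eninj; exact: kinj.
  - rewrite fR // => h; exfalso.
    by apply: (Troot (en (k u)) (en (k v)) (f v) (enW _) (fT v hv)).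
  - rewrite (fR v) // => h; exfalso.
    by apply: (Troot (en (k v)) (en (k u)) (f u) (enW _) (fT u hu)).
  - move=> h; have e1 := fT u hu; have e2 := fT v hv; rewrite h in e1.
    have ekk := Tdisj _ _ _ e1 e2.
    move: h; rewrite /f !asboolF // ekk => /((Hg _ (enW _)).2).
    exact: (pcan_inj (@pickleK V)).
have fin v : ([set en (k v)] `|` T (en (k v))) (f v).
  case: (pselect (isr v)) => hv; first by left; rewrite fR.
  by right; exact: fT.
have Wf : W `<=` range f.
  move=> x /ensurj [n <-]; have [v [hv kv]] := ksurj n.
  by exists v => //; rewrite fR // kv.
rewrite /Rd_phi; apply: le_ereal_sup_tmp; exists (upper_density R (range f)).
  exists f; split => //.
  - split => // v; case: (pselect (isr v)) => hv.
      by rewrite fR //; exact: Wpos.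
    by have [_ pT _] := WT _ (enW (k v)); exact: pT (fT v hv).
  - exists c => u v euv.
    have [_ _ cl] := WT _ (enW (k u)).
    apply: cl.
    + exact: fin.
    + by rewrite (kedge _ _ euv); exact: fin.
    + move=> /finj uv; move: euv; rewrite uv.
      by have := sg.2 v; case: (e v v).
apply: ud_lb => eps eps0 N; have [t [Nt ht]] := dens eps eps0 N.
exists t; split => //; apply: le_trans ht _.
apply: ler_wpM2r; first by rewrite invr_ge0.
rewrite ler_nat; apply: sub_count => x /asboolP /Wf hx.
by apply/asboolP.
Qed.
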